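(* Let $\mathcal A_+,\mathcal A_-\subseteq\mathbb R^n$ be disjoint finite sets such that $\mathcal A=\mathcal A_+\cup\mathcal A_-$ is full dimensional and $(\mathcal A_+,\mathcal A_-)$ is nonseparable, and fix $D\in\mathcal F_n(\mathcal A_+)$ with $\mathcal A_-\subseteq D$; let $r=\#\Lambda(\mathcal A_+,D)$. Let $f\in\mathcal S(\mathcal A_+,\mathcal A_-)$ have nonsigned coefficients $c\in\mathbb R^{\mathcal A}_{>0}$ with $\mathbb 1\in\operatorname{Sing}_{>0}(f)$. Then $\mathcal Z(\Lambda(\mathcal A_+,D),c)\cap\mathbb R^r_{\ge0}\neq\varnothing$.
   Context: A signomial with signed support $(\mathcal A_+,\mathcal A_-)$ is $f(x)=\sum_{a\in\mathcal A_+}c_ax^a-\sum_{b\in\mathcal A_-}c_bx^b$ on $\mathbb R^n_{>0}$ with all $c_a,c_b>0$; $\mathcal S(\mathcal A_+,\mathcal A_-)$ is the set of these. Full dimensional: $\dim\operatorname{conv}(\mathcal A)=n$. $\operatorname{Sing}_{>0}(f)$ is the set of $x\in\mathbb R^n_{>0}$ with $f(x)=x_1\partial_{x_1}f(x)=\dots=x_n\partial_{x_n}f(x)=0$; $\mathbb 1=(1,\dots,1)$. $\mathcal F(\mathcal A_+)$ is the common refinement of all regular polyhedral subdivisions of $\mathcal A_+$, $\mathcal F_n(\mathcal A_+)$ its $n$-dimensional cells; $(\mathcal A_+,\mathcal A_-)$ is nonseparable if $\mathcal A_-\subseteq\operatorname{relint}\operatorname{conv}(\mathcal A_+)$ and some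 $D\in\mathcal F_n(\mathcal A_+)$ contains $\mathcal A_-$. $\Lambda(\mathcal A_+,D)=\{\Delta_1,\dots,\Delta_r\}$ is the set of $n$-simplices with vertices in $\mathcal A_+$ with $\operatorname{relint}(D)\subseteq\operatorname{relint}(\Delta)$. With $\lambda^b_{a,k}$ the barycentric coordinates of $b\in\mathcal A_-$ w.r.t. the vertices of $\Delta_k$, $\mathcal Z(\Lambda,c)\subseteq\mathbb R^r$ is the solution set of $c_a=\sum_{k:\,a\in\operatorname{vertices}(\Delta_k)}\delta_k\big(\sum_{b\in\mathcal A_-}\lambda^b_{a,k}c_b\big)$, $a\in\mathcal A_+$, in the unknowns $\delta_1,\dots,\delta_r$. *)

(* Defs.v *)
From HB Require Import structures.
From mathcomp Require Import all_boot all_order all_algebra.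
From mathcomp Require Import all_classical all_reals all_analysis.
Set Implicit Arguments. Unset Strict Implicit. Unset Printing Implicit Defensive.
Import Order.TTheory GRing.Theory Num.Theory.
Import numFieldNormedType.Exports.
Local Open Scope classical_set_scope.
Local Open Scope ring_scope.

Section Defs.
Variables (R : realType) (n : nat).
Notation pt := 'rV[R]_n.

Definition dotv (u x : pt) : R := \sum_(k < n) u 0 k * x 0 k.

Definition convhull (S : set pt) : set pt :=
  [set x | exists (k : nat) (w : 'I_k -> R) (y : 'I_k -> pt),
     (forall i, S (y i)) /\ (forall i, 0 <= w i) /\ \sum_i w i = 1 /\
     x = \sum_i w i *: y i].

Definition aff_hull (S : set pt) : set pt :=
  [set x | exists (k : nat) (w : 'I_k -> R) (y : 'I_k -> pt),
     (forall i, S (y i)) /\ \sum_i w i = 1 /\ x = \sum_i w i *: y i].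

Definition relint (C : set pt) : set pt :=
  [set x | C x /\ exists e : R, 0 < e /\
     forall y, aff_hull C y -> `|y - x| < e -> C y].

Definition full_dim (S : set pt) : Prop := aff_hull S = setT.

Section Config.
Variables (p : nat) (ap : 'I_p -> pt).

Definition pts (V : {set 'I_p}) : set pt :=
  [set x | exists i, i \in V /\ x = ap i].

(* cells of the regular polyhedral subdivision of A_+ induced by heights w:
   projections of the lower faces of the lifted configuration *)
Definition reg_cell (w : 'I_p -> R) (C : set pt) : Prop :=
  exists (u : pt) (h : R),
    (forall i, dotv u (ap i) + h <= w i) /\
    (exists i, dotv u (ap i) + h = w i) /\
    C = convhull (pts [set i | dotv u (ap i) + h == w i]).

(* cells of the common refinement F(A_+) of all regular subdivisions:
   intersections of one cell from each regular subdivision *)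
Definition refine_cell (D : set pt) : Prop :=
  exists sel : ('I_p -> R) -> set pt,
    (forall w, reg_cell w (sel w)) /\ D = [set x | forall w, sel w x].

Definition Fn_cell (D : set pt) : Prop := refine_cell D /\ full_dim D.

(* n-simplices with vertices in A_+ whose relative interior contains relint D *)
Definition in_Lambda (D : set pt) (V : {set 'I_p}) : Prop :=
  #|V| = n.+1 /\ full_dim (convhull (pts V)) /\
  relint D `<=` relint (convhull (pts V)).

Definition is_bary (V : {set 'I_p}) (b : pt) (lam : 'I_p -> R) : Prop :=
  (forall i, i \notin V -> lam i = 0) /\ \sum_i lam i = 1 /\
  \sum_i lam i *: ap i = b.

Definition bary (V : {set 'I_p}) (b : pt) : 'I_p -> R :=
  match pselect (exists lam, is_bary V b lam) with
  | left h => projT1 (cid h)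
  | right _ => fun _ => 0
  end.

Variables (m : nat) (am : 'I_m -> pt).

Definition allpts : set pt :=
  [set x | (exists i, x = ap i) \/ (exists j, x = am j)].

Definition nonseparable : Prop :=
  (forall j, relint (convhull (pts [set: 'I_p]%SET)) (am j)) /\
  exists D, Fn_cell D /\ forall j, D (am j).

Definition monom (a x : pt) : R := \prod_(k < n) powR (x 0 k) (a 0 k).

Definition signomial (cp : 'I_p -> R) (cm : 'I_m -> R) (x : pt) : R :=
  \sum_i cp i * monom (ap i) x - \sum_j cm j * monom (am j) x.

End Config.

Definition Sing_pos (f : pt -> R) (x : pt) : Prop :=
  (forall k, 0 < x 0 k) /\ f x = 0 /\
  forall k : 'I_n, derivable f x (delta_mx 0 k) /\
    x 0 k * derive f x (delta_mx 0 k) = 0.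

End Defs.

(* Main.v *)
Require Import Defs.
From HB Require Import structures.
From mathcomp Require Import all_boot all_order all_algebra.
From mathcomp Require Import all_classical all_reals all_analysis.
Import Order.TTheory GRing.Theory Num.Theory.
Import numFieldNormedType.Exports.
Local Open Scope classical_set_scope.
Local Open Scope ring_scope.
From mathcomp Require Import ring lra.

Section Moments.
Variables (R : realType) (n p m : nat) (ap : 'I_p -> 'rV[R]_n) (am : 'I_m -> 'rV[R]_n)
  (cp : 'I_p -> R) (cm : 'I_m -> R).

Definition Gk (k : 'I_n) : R -> R := fun t =>
  \sum_i cp i * powR t (ap i 0 k) - \sum_j cm j * powR t (am j 0 k).

Lemma monom_e (a : 'rV[R]_n) k (h : R) :
  monom a (h *: delta_mx 0 k + const_mx 1) = powR (h + 1) (a 0 k).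
Proof.
rewrite /monom (bigD1 k) //= big1 ?mulr1.
  by rewrite !mxE !eqxx /= mulr1.
move=> i ik; rewrite !mxE (negbTE ik) andbF mulr0 add0r powR1 //.
Qed.

Lemma monom_1 (a : 'rV[R]_n) : monom a (const_mx 1) = 1.
Proof. by rewrite /monom big1 // => i _; rewrite mxE powR1. Qed.

Lemma derive_sig k : derive (signomial ap am cp cm) (const_mx 1) (delta_mx 0 k) =
   derive (Gk k) 1 1.
Proof.
rewrite /derive.
suff -> : (fun h : R => h^-1 *: ((signomial ap am cp cm \o shift (const_mx 1)) (h *: delta_mx 0 k) - signomial ap am cp cm (const_mx 1))) = (fun h : R => h^-1 *: ((Gk k \o shift 1) (h *: 1) - Gk k 1)) by [].
apply/funext => h /=.
rewrite /signomial /Gk; congr (_ *: (_ - _)).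
  have hA : h%:A = h :> R by rewrite /GRing.scale /= mulr1.
  by congr (_ - _); apply: eq_bigr => i _; rewrite monom_e hA.
rewrite !powR1; congr (_ - _); by apply: eq_bigr => i _; rewrite monom_1.
Qed.

Lemma Gk_der k : is_derive (1:R) 1 (Gk k)
   (\sum_i cp i * ap i 0 k - \sum_j cm j * am j 0 k).
Proof.
have -> : Gk k = (\sum_i (cp i \*: (fun t : R => powR t (ap i 0 k)))) -
                 (\sum_j (cm j \*: (fun t : R => powR t (am j 0 k)))).
  apply/funext => t; rewrite /Gk !fct_sumE /=.
  by congr (_ - _); apply: eq_bigr.
have E : forall a : R, a = a * 1 `^ (a - 1) by move=> a; rewrite powR1 mulr1.
apply: is_deriveB; apply: is_derive_sum => i; rewrite [X in _ * X]E;
  apply: is_deriveZ; apply: is_derive1_powR; exact: ltr01.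
Qed.

Lemma moments : Sing_pos (signomial ap am cp cm) (const_mx 1) ->
  \sum_i cp i = \sum_j cm j /\ \sum_i cp i *: ap i = \sum_j cm j *: am j.
Proof.
move=> [_ [f0 hd]]; split.
  move: f0; rewrite /signomial.
  under eq_bigr do rewrite monom_1 mulr1.
  under [X in _ - X = _]eq_bigr do rewrite monom_1 mulr1.
  by move/eqP; rewrite subr_eq0 => /eqP.
apply/rowP => k; have [_ hk] := hd k.
move: hk; rewrite mxE mul1r derive_sig; case: (Gk_der k) => _ -> /eqP; rewrite subr_eq0 => /eqP hk.
rewrite !summxE; under eq_bigr do rewrite mxE.
by rewrite hk; apply: eq_bigr => j _; rewrite mxE.
Qed.
End Moments.
Section Geo.
Variables (R : realType) (n p : nat) (ap : 'I_p -> 'rV[R]_n).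
Local Notation pt := 'rV[R]_n.

Lemma dotvD (u x y : pt) : dotv u (x + y) = dotv u x + dotv u y.
Proof. by rewrite /dotv -big_split; apply: eq_bigr => k _; rewrite mxE mulrDr. Qed.
Lemma dotvZ (u : pt) (c : R) (x : pt) : dotv u (c *: x) = c * dotv u x.
Proof. by rewrite /dotv mulr_sumr; apply: eq_bigr => k _; rewrite mxE mulrCA. Qed.
Lemma dotv0 (u : pt) : dotv u (0 : pt) = 0.
Proof. by rewrite /dotv big1 // => k _; rewrite mxE mulr0. Qed.
Lemma dotvBl (u1 u2 x : pt) : dotv (u1 - u2) x = dotv u1 x - dotv u2 x.
Proof. by rewrite /dotv -sumrB; apply: eq_bigr => k _; rewrite !mxE mulrBl. Qed.
Lemma dotv_sum (u : pt) (I : Type) (r : seq I) (P : pred I) (F : I -> pt) :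
  dotv u (\sum_(i <- r | P i) F i) = \sum_(i <- r | P i) dotv u (F i).
Proof.
elim: r => [|i r IH]; first by rewrite !big_nil dotv0.
by rewrite !big_cons; case: (P i); rewrite ?dotvD IH.
Qed.

Lemma sum_aff (I : finType) (c : I -> R) (x : I -> pt) (u : pt) (h : R) :
  \sum_i c i * (dotv u (x i) + h) = dotv u (\sum_i c i *: x i) + h * \sum_i c i.
Proof.
rewrite dotv_sum mulr_sumr -big_split; apply: eq_bigr => i _.
by rewrite dotvZ mulrDr [h * _]mulrC.
Qed.

Lemma aff_sum (I : finType) (c : I -> R) (x : I -> pt) (u : pt) (h : R) : \sum_i c i = 1 ->
  dotv u (\sum_i c i *: x i) + h = \sum_i c i * (dotv u (x i) + h).
Proof. by move=> c1; rewrite sum_aff c1 mulr1. Qed.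

Lemma bary_aff V (x : pt) lam (u : pt) (h : R) : is_bary ap V x lam ->
  dotv u x + h = \sum_a lam a * (dotv u (ap a) + h).
Proof. by case=> _ [s1 <-]; exact: aff_sum. Qed.

Lemma collapse V k (w : 'I_k -> R) (y : 'I_k -> pt) (L : 'I_k -> 'I_p -> R) :
  (forall i, is_bary ap V (y i) (L i)) -> \sum_i w i = 1 ->
  is_bary ap V (\sum_i w i *: y i) (fun a => \sum_i w i * L i a).
Proof.
move=> hL w1; split; [|split].
- move=> a aV; apply: big1 => i _; have [h0 _] := hL i; by rewrite h0 // mulr0.
- rewrite exchange_big /= -w1; apply: eq_bigr => i _; have [_ [s1 _]] := hL i.
  by rewrite -mulr_sumr s1 mulr1.
- under eq_bigr do rewrite scaler_suml.
  rewrite exchange_big /=; apply: eq_bigr => i _; have [_ [_ e]] := hL i.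
  by rewrite -e scaler_sumr; apply: eq_bigr => a _; rewrite scalerA.
Qed.

Lemma conv_bary V (x : pt) : convhull (pts ap V) x ->
  exists lam, (forall a, 0 <= lam a) /\ is_bary ap V x lam.
Proof.
move=> [k [w [y [hy [w0 [w1 ->]]]]]].
have [j hj] := choice hy.
exists (fun a => \sum_i w i * (a == j i)%:R); split.
  by move=> a; apply: sumr_ge0 => i _; apply: mulr_ge0 => //; exact: ler0n.
apply: collapse => // i; have [jV ->] := hj i; split; [|split].
- move=> a aV; case: eqP => // ea; by rewrite ea jV in aV.
- by rewrite (bigD1 (j i)) //= eqxx big1 ?addr0 // => a /negbTE ->.
- rewrite (bigD1 (j i)) //= eqxx scale1r big1 ?addr0 // => a /negbTE ->.
  by rewrite scale0r.
Qed.

Lemma affconv_bary V (x : pt) : aff_hull (convhull (pts ap V)) x ->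
  exists lam, is_bary ap V x lam.
Proof.
move=> [k [w [y [hy [w1 ->]]]]].
have [L hL] : {L : 'I_k -> 'I_p -> R & forall i, is_bary ap V (y i) (L i)}.
  apply: (@choice _ _ (fun i l => is_bary ap V (y i) l)) => i.
  by have [lam [_ hl]] := conv_bary _ _ (hy i); exists lam.
by exists (fun a => \sum_i w i * L i a); apply: collapse.
Qed.

Definition indep (V : {set 'I_p}) := forall mu : 'I_p -> R,
  (forall a, a \notin V -> mu a = 0) -> \sum_a mu a = 0 ->
  \sum_a mu a *: ap a = 0 -> forall a, mu a = 0.

Lemma bary_uniq V (x : pt) l1 l2 : indep V -> is_bary ap V x l1 -> is_bary ap V x l2 ->
  forall a, l1 a = l2 a.
Proof.
move=> hI [z1 [s1 e1]] [z2 [s2 e2]] a; apply/eqP; rewrite -subr_eq0; apply/eqP.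
apply: (hI (fun a => l1 a - l2 a)).
- by move=> b bV; rewrite z1 ?z2 ?subr0.
- by rewrite sumrB s1 s2 subrr.
- under eq_bigr do rewrite scalerBl.
  by rewrite sumrB e1 e2 subrr.
Qed.

Lemma indep_span_card (V : {set 'I_p}) : indep V ->
  (forall x : pt, exists lam, is_bary ap V x lam) -> #|V| = n.+1.
Proof.
move=> hI hS.
pose Mr : 'M[R]_(#|V|, n) := \matrix_(i, j) ap (enum_val i) 0 j.
pose c1 : 'M[R]_(#|V|, 1) := const_mx 1.
pose M := row_mx c1 Mr.
have eMr : forall r : 'rV[R]_#|V|, r *m Mr = \sum_i r 0 i *: ap (enum_val i).
  move=> r; apply/rowP => j; rewrite !mxE summxE; apply: eq_bigr => i _.
  by rewrite !mxE.
have eMl : forall r : 'rV[R]_#|V|, r *m c1 = const_mx (\sum_i r 0 i).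
  move=> r; apply/matrixP => a b; rewrite !mxE; apply: eq_bigr => i _.
  by rewrite /c1 mxE mulr1 (ord1 a).
have hfree : row_free M.
  rewrite -kermx_eq0; apply/eqP/row_matrixP => i; rewrite row0.
  set r := row i (kermx M).
  have : r *m M = 0 by apply/sub_kermxP; exact: row_sub.
  rewrite mul_mx_row eMl eMr -row_mx0 => /eq_row_mx [h1 h2].
  have s0 : \sum_i r 0 i = 0.
    by have := congr1 (fun N : 'M[R]_(1,1) => N 0 0) h1; rewrite /= !mxE.
  pose mu a := \sum_(i | enum_val i == a) r 0 i.
  have hp : forall F : 'I_#|V| -> 'rV[R]_(n), \sum_a \sum_(i | enum_val i == a) F i = \sum_i F i.
    move=> F; rewrite (partition_big (fun i => enum_val i) predT) //=.
  have hmu : forall a, mu a = 0.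
    apply: hI.
    - move=> a aV; apply: big1 => j /eqP ej; by rewrite -ej enum_valP in aV.
    - rewrite /mu -[RHS]s0 (partition_big (fun i => enum_val i) predT) //=.
    - rewrite -[RHS]h2 -hp; apply: eq_bigr => a _; rewrite /mu scaler_suml.
      by apply: eq_bigr => j /eqP ->.
  apply/rowP => j; have := hmu (enum_val j).
  rewrite /mu (bigD1 j) //= big1 ?addr0.
    by move=> ->; rewrite mxE.
  move=> k /andP [/eqP ekj kj].
  by move/enum_val_inj: ekj => ekj; rewrite ekj eqxx in kj.
have hx : forall x : pt, (row_mx (const_mx 1 : 'M[R]_(1,1)) x <= M)%MS.
  move=> x; have [lam [z1 [s1 e1]]] := hS x.
  have -> : row_mx (const_mx 1 : 'M[R]_(1,1)) x = (\row_i lam (enum_val i)) *m M.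
    rewrite mul_mx_row eMl eMr; congr row_mx.
      apply/matrixP => ? ?; rewrite !mxE -[LHS]s1; symmetry.
      under eq_bigr do rewrite mxE.
      rewrite -big_enum_val /= big_mkcond /=.
      by apply: eq_bigr => a _; case: ifPn => // /z1 ->.
    rewrite -e1; symmetry; under eq_bigr do rewrite mxE.
    rewrite -(big_enum_val (fun a => lam a *: ap a)) /= big_mkcond /=.
    by apply: eq_bigr => a _; case: ifPn => // /z1 ->; rewrite scale0r.
  exact: submxMl.
have hall : forall v : 'rV[R]_(1 + n), (v <= M)%MS.
  move=> v; rewrite -(hsubmxK v); set a := lsubmx v 0 0.
  have -> : lsubmx v = a *: (const_mx 1 : 'M[R]_(1,1)).
    by apply/matrixP => i j; rewrite !ord1 /a [RHS]mxE [X in _ * X]mxE mulr1.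
  have -> : row_mx (a *: (const_mx 1 : 'M[R]_(1,1))) (rsubmx v) =
     a *: row_mx (const_mx 1 : 'M[R]_(1,1)) 0 +
     (row_mx (const_mx 1 : 'M[R]_(1,1)) (rsubmx v) +
      (-1) *: row_mx (const_mx 1 : 'M[R]_(1,1)) 0).
    rewrite !scale_row_mx !add_row_mx !scaler0 !addr0 add0r.
    by rewrite scaleN1r subrr addr0.
  by apply: addmx_sub; [apply: scalemx_sub | apply: addmx_sub; [|apply: scalemx_sub]].
have h1 : ((1%:M : 'M[R]_(1 + n)) <= M)%MS by apply/row_subP => i; exact: hall.
have := mxrankS h1; rewrite mxrank1 => hr.
move: hfree; rewrite /row_free => /eqP hf.
have := rank_leq_col M; rewrite hf in hr * => hc.
by apply/eqP; rewrite eqn_leq; apply/andP; split.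
Qed.


Variables (m : nat) (am : 'I_m -> pt) (cm : 'I_m -> R) (D : set pt).
Variables (U : ('I_p -> R) -> pt) (H : ('I_p -> R) -> R).
Definition ell w (x : pt) := dotv (U w) x + H w.
Definition Fs w : {set 'I_p} := [set i | ell w (ap i) == w i]%SET.
Hypothesis hle : forall w i, ell w (ap i) <= w i.
Hypothesis hconv : forall w x, D x -> convhull (pts ap (Fs w)) x.
Hypothesis hfull : full_dim D.
Hypothesis hb : forall j, D (am j).
Hypothesis cmpos : forall j, 0 < cm j.
Hypothesis mpos : (0 < m)%N.

Definition Cm := \sum_j cm j.
Definition Bm := \sum_j cm j *: am j.

Lemma Cpos : 0 < Cm.
Proof.
rewrite /Cm (bigD1 (Ordinal mpos)) //=; apply: (lt_le_trans (cmpos (Ordinal mpos))).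
by rewrite lerDl; apply: sumr_ge0 => j _; exact: ltW (cmpos j).
Qed.

Lemma bary_eval w V (x : pt) lam : is_bary ap V x lam ->
  ell w x = \sum_a lam a * ell w (ap a).
Proof. exact: bary_aff. Qed.

Lemma D_eval w x : D x -> exists lam, (forall a, 0 <= lam a) /\
  is_bary ap (Fs w) x lam /\ ell w x = \sum_a lam a * w a.
Proof.
move=> Dx; have [lam [l0 hl]] := conv_bary _ _ (hconv w x Dx).
exists lam; split => //; split => //.
rewrite (bary_eval w _ _ _ hl); apply: eq_bigr => a _.
case: (boolP (a \in Fs w)) => aF.
  by move: aF; rewrite inE => /eqP ->.
by have [z _] := hl; rewrite z // !mul0r.
Qed.

Lemma ell_am_ge0 w : (forall a, 0 <= w a) -> forall j, 0 <= ell w (am j).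
Proof.
move=> w0 j; have [lam [l0 [_ ->]]] := D_eval w _ (hb j).
by apply: sumr_ge0 => a _; exact: mulr_ge0.
Qed.

Definition Mom (rho : 'I_p -> R) := Cm *: \sum_a rho a *: ap a = (\sum_a rho a) *: Bm.

Lemma sum_rho_ell w rho : Mom rho ->
  Cm * \sum_a rho a * ell w (ap a) = (\sum_a rho a) * \sum_j cm j * ell w (am j).
Proof.
move=> hM; rewrite /ell !sum_aff -/Bm -/Cm mulrDr -dotvZ hM dotvZ.
ring.
Qed.

Definition supp (rho : 'I_p -> R) : {set 'I_p} := [set a | rho a != 0]%SET.
Definition adm (S : {set 'I_p}) (w : 'I_p -> R) :=
  (forall a, 0 <= w a) /\ (forall a, a \in S -> w a = 0).

Lemma KS rho w : (forall a, 0 <= rho a) -> Mom rho -> adm (supp rho) w ->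
  supp rho \subset Fs w.
Proof.
move=> r0 hM [w0 wS].
have hge : 0 <= \sum_a rho a * ell w (ap a).
  have Y0 : 0 <= (\sum_a rho a) * \sum_j cm j * ell w (am j).
    apply: mulr_ge0; first by apply: sumr_ge0 => a _; exact: r0.
    apply: sumr_ge0 => j _; apply: mulr_ge0; first exact: ltW.
    exact: ell_am_ge0.
  by rewrite -(sum_rho_ell w _ hM) (pmulr_rge0 _ Cpos) in Y0.
have hle0 : forall a, rho a * ell w (ap a) <= 0.
  move=> a; case: (boolP (a \in supp rho)) => aS.
    by rewrite mulr_ge0_le0 // -(wS a aS); exact: hle.
  by move: aS; rewrite inE negbK => /eqP ->; rewrite mul0r.
have hz : forall a, rho a * ell w (ap a) = 0.
  move=> a; apply/eqP; rewrite -oppr_eq0; apply/eqP.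
  apply: (@psumr_eq0P _ _ predT (fun a => - (rho a * ell w (ap a)))) => //.
    by move=> i _; rewrite oppr_ge0.
  apply/eqP; rewrite eq_le; apply/andP; split.
    by rewrite sumrN oppr_le0.
  by apply: sumr_ge0 => i _; rewrite oppr_ge0.
apply/fintype.subsetP => a aS; rewrite inE.
move: (hz a) (aS); rewrite inE => /eqP; rewrite mulf_eq0 => /orP [/eqP ->|/eqP e].
  by rewrite eqxx.
by move=> _; rewrite e wS.
Qed.

Lemma Kbound (z : pt) : exists K, 0 <= K /\ forall (u : pt) (h : R),
  (forall x, D x -> 0 <= dotv u x + h <= 1) -> dotv u z + h <= K.
Proof.
have : aff_hull D z by rewrite hfull.
move=> [k [c [x [Dx [c1 ->]]]]].
exists (\sum_i `|c i|); split; first by apply: sumr_ge0 => i _; exact: normr_ge0.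
move=> u h hd; rewrite aff_sum //; apply: ler_sum => i _.
have /andP [d0 d1] := hd _ (Dx i).
apply: (le_trans (ler_norm _)); rewrite normrM (ger0_norm d0).
by rewrite ler_piMr.
Qed.

Lemma refine_step S w : indep S -> (forall w', adm S w' -> S \subset Fs w') ->
  adm S w -> ~ indep (Fs w) ->
  exists w2, adm S w2 /\ (#|Fs w2| < #|Fs w|)%N.
Proof.
move=> hiS hS [w0 wS] hni.
have hsub := hS w (conj w0 wS).
have [mu [mz [ms [mv [a0 ma0]]]]] : exists mu : 'I_p -> R,
    (forall a, a \notin Fs w -> mu a = 0) /\ \sum_a mu a = 0 /\
    \sum_a mu a *: ap a = 0 /\ exists a, mu a != 0.
  apply: contrapT => hn; apply: hni => mu hz hs hv a.
  apply/eqP/negPn/negP => hna; apply: hn; exists mu; split => //; split => //.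
  by split => //; exists a.
have [f0 [f0S mf0]] : exists f0, f0 \notin S /\ mu f0 != 0.
  apply: contrapT => hn; move/eqP: ma0; apply.
  apply: (hiS mu) => // a aS; apply/eqP/negPn/negP => ma; apply: hn; by exists a.
have f0F : f0 \in Fs w.
  by apply/negPn/negP => hf; rewrite (mz _ hf) eqxx in mf0.
have [K hK] := choice (fun a => Kbound (ap a)).
pose Mx := \sum_a K a.
have KM : forall a, K a <= Mx.
  move=> a; rewrite /Mx (bigD1 a) //= lerDl; apply: sumr_ge0 => i _.
  exact: (hK i).1.
have M0 : 0 <= Mx by apply: sumr_ge0 => i _; exact: (hK i).1.
pose w2 := fun a => w a + (a == f0)%:R + (a \notin Fs w)%:R * Mx.
have adm2 : adm S w2.
  split.
    move=> a; rewrite /w2; apply: addr_ge0; last exact: mulr_ge0.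
    exact: addr_ge0.
  move=> a aS; rewrite /w2 wS //.
  have -> : (a == f0) = false by apply/eqP => e; rewrite -e aS in f0S.
  by rewrite (fintype.subsetP hsub a aS) /= mul0r !addr0.
exists w2; split => //.
pose d x := ell w2 x - ell w x.
have dlin : forall x, d x = dotv (U w2 - U w) x + (H w2 - H w).
  by move=> x; rewrite /d /ell dotvBl; ring.
have ellF : forall a, a \in Fs w -> ell w (ap a) = w a.
  by move=> a; rewrite inE => /eqP.
have ellF2 : forall a, a \in Fs w2 -> ell w2 (ap a) = w2 a.
  by move=> a; rewrite inE => /eqP.
have hd : forall x, D x -> 0 <= d x <= 1.
  move=> x Dx; apply/andP; split.
  - have [lam [l0 hl]] := conv_bary _ _ (hconv w2 x Dx).
    rewrite subr_ge0 (bary_eval w2 _ _ _ hl) (bary_eval w _ _ _ hl).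
    apply: ler_sum => a _; have [z _] := hl.
    case: (boolP (a \in Fs w2)) => aF; last by rewrite z // !mul0r.
    apply: ler_wpM2l => //; rewrite ellF2 // (le_trans (hle w a)) // /w2.
    by rewrite -addrA lerDl; apply: addr_ge0 => //; apply: mulr_ge0.
  - have [lam [l0 hl]] := conv_bary _ _ (hconv w x Dx).
    rewrite lerBlDl (bary_eval w2 _ _ _ hl).
    have -> : ell w x + 1 = \sum_a lam a * (ell w (ap a) + 1).
      rewrite /ell -addrA (bary_aff _ _ _ (U w) (H w + 1) hl).
      by apply: eq_bigr => a _; rewrite addrA.
    apply: ler_sum => a _; have [z _] := hl.
    case: (boolP (a \in Fs w)) => aF; last by rewrite z // !mul0r.
    apply: ler_wpM2l => //; rewrite (le_trans (hle w2 a)) // /w2 aF /= mul0r addr0.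
    by rewrite ellF // lerD2l; case: (a == f0); rewrite ?ler01 ?lexx.
have s21 : Fs w2 \subset Fs w.
  apply/fintype.subsetP => a a2; apply/negPn/negP => aF.
  have lt1 : ell w (ap a) < w a.
    by rewrite lt_neqAle hle andbT; move: aF; rewrite inE.
  have dK : d (ap a) <= K a.
    rewrite dlin; apply: (hK a).2 => x Dx; rewrite -dlin; exact: hd.
  have af0 : (a == f0) = false by apply/eqP => e; rewrite e f0F in aF.
  have : ell w2 (ap a) < w2 a.
    have -> : ell w2 (ap a) = ell w (ap a) + d (ap a) by rewrite /d; ring.
    rewrite /w2 af0 aF /= addr0 mul1r.
    exact: ltr_leD lt1 (le_trans dK (KM a)).
  by rewrite ellF2 // ltxx.
have n21 : Fs w2 != Fs w.
  apply/eqP => e.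
  have h0 : \sum_a mu a * d (ap a) = 0.
    under eq_bigr do rewrite dlin.
    by rewrite sum_aff mv dotv0 ms mulr0 addr0.
  have h1 : \sum_a mu a * d (ap a) = mu f0.
    rewrite (bigD1 f0) //= big1 ?addr0.
      have f02 : f0 \in Fs w2 by rewrite e.
      by rewrite /d ellF2 // ellF // /w2 f0F eqxx /= mul0r addr0 addrAC subrr add0r mulr1.
    move=> a af; case: (boolP (a \in Fs w)) => aF; last by rewrite mz // mul0r.
    have a2 : a \in Fs w2 by rewrite e.
    by rewrite /d ellF2 // ellF // /w2 aF (negbTE af) /= mul0r !addr0 subrr mulr0.
  by rewrite -h1 h0 eqxx in mf0.
apply: proper_card; rewrite finset.properEneq; apply/andP; split => //.
Qed.

Lemma find_face S : indep S -> (forall w', adm S w' -> S \subset Fs w') ->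
  exists w, adm S w /\ indep (Fs w).
Proof.
move=> hiS hS.
suff : forall k w, adm S w -> (#|Fs w| <= k)%N -> exists w, adm S w /\ indep (Fs w).
  move=> H0; apply: (H0 #|Fs (fun=> 0)| (fun=> 0)) => //.
elim => [|k IH] w hw hk.
  case: (pselect (indep (Fs w))) => hi; first by exists w.
  have [w2 [_ hlt]] := refine_step _ _ hiS hS hw hi.
  by move: hk; rewrite leqn0 => /eqP e; rewrite e in hlt.
case: (pselect (indep (Fs w))) => hi; first by exists w.
have [w2 [h2 hlt]] := refine_step _ _ hiS hS hw hi.
by apply: (IH w2 h2); rewrite -ltnS; apply: leq_trans hlt hk.
Qed.

Lemma in_Lambda_of F : indep F -> (forall x, D x -> convhull (pts ap F) x) ->
  in_Lambda ap D F.
Proof.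
move=> hiF hDF.
have hfd : full_dim (convhull (pts ap F)).
  rewrite /full_dim; apply/seteqP; split => // x _.
  have : aff_hull D x by rewrite hfull.
  move=> [k [c [y [Dy [c1 ->]]]]]; exists k, c, y; split => // i; exact: hDF.
split; last split => //.
  apply: indep_span_card => // x; apply: affconv_bary.
  by rewrite hfd.
move=> x [Dx [e [e0 he]]]; split; first exact: hDF.
exists e; split => // y _ hy; apply: hDF; apply: he => //.
by rewrite hfull.
Qed.

Lemma bary_spec V (b : pt) : (exists lam, is_bary ap V b lam) ->
  is_bary ap V b (bary ap V b).
Proof. by move=> h; rewrite /bary; case: pselect => // h'; case: (cid h'). Qed.

Definition Rep (rho : 'I_p -> R) := exists delta : {set 'I_p} -> R,
  (forall V, in_Lambda ap D V -> 0 <= delta V) /\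
  forall a, rho a = \sum_(V : {set 'I_p} | `[< in_Lambda ap D V >] && (a \in V))
               delta V * (\sum_j bary ap V (am j) a * cm j).

Lemma Rep_ext r1 r2 : (forall a, r1 a = r2 a) -> Rep r2 -> Rep r1.
Proof. by move=> e [d [d0 hd]]; exists d; split => // a; rewrite e. Qed.

Lemma RepC r1 r2 (al be : R) : 0 <= al -> 0 <= be -> Rep r1 -> Rep r2 ->
  Rep (fun a => al * r1 a + be * r2 a).
Proof.
move=> a0 b0 [d1 [d10 h1]] [d2 [d20 h2]].
exists (fun V => al * d1 V + be * d2 V); split.
  by move=> V hV; apply: addr_ge0; apply: mulr_ge0 => //; [exact: d10|exact: d20].
move=> a; rewrite h1 h2 !mulr_sumr -big_split; apply: eq_bigr => V _.
by rewrite mulrDl !mulrA.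
Qed.

Lemma Rep_simplex F rho : indep F -> in_Lambda ap D F -> supp rho \subset F ->
  (forall a, 0 <= rho a) -> Mom rho -> Rep rho.
Proof.
move=> hiF hLF hsF r0 hM.
have zF : forall a, a \notin F -> rho a = 0.
  move=> a aF; apply/eqP/negPn/negP => ra.
  by move: aF; rewrite (fintype.subsetP hsF) // inE.
have hsp : forall x : pt, exists lam, is_bary ap F x lam.
  by move=> x; apply: affconv_bary; have [_ [-> _]] := hLF.
set s := \sum_a rho a.
have s0 : 0 <= s by apply: sumr_ge0 => a _; exact: r0.
have [s_eq0|s_ne0] := eqVneq s 0.
  exists (fun=> 0); split => // a.
  rewrite big1; last by move=> V _; rewrite mul0r.
  by apply: (@psumr_eq0P _ _ predT rho) => // i _; exact: r0.
have spos : 0 < s by rewrite lt_neqAle eq_sym s_ne0 s0.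
have Cp := Cpos.
pose X a := \sum_j bary ap F (am j) a * cm j.
have key : forall a, rho a = s / Cm * X a.
  pose l1 a := X a / Cm.
  pose l2 a := rho a / s.
  have b1 : is_bary ap F (Cm^-1 *: Bm) l1.
    split; [|split].
    - move=> a aF; rewrite /l1 /X big1 ?mul0r // => j _.
      by have [z _] := bary_spec _ _ (hsp (am j)); rewrite z // mul0r.
    - rewrite /l1 -mulr_suml /X exchange_big /= -/Cm.
      rewrite (eq_bigr (fun j => cm j)) ?divff ?gt_eqF // => j _.
      have [_ [s1 _]] := bary_spec _ _ (hsp (am j)).
      by rewrite -mulr_suml s1 mul1r.
    - have -> : \sum_a l1 a *: ap a = Cm^-1 *: \sum_a X a *: ap a.
        by rewrite scaler_sumr; apply: eq_bigr => a _; rewrite /l1 scalerA mulrC.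
      congr (_ *: _); rewrite /Bm.
      under eq_bigr do rewrite /X scaler_suml.
      rewrite exchange_big /=; apply: eq_bigr => j _.
      have [_ [_ e]] := bary_spec _ _ (hsp (am j)).
      by rewrite -[in RHS]e scaler_sumr; apply: eq_bigr => a _; rewrite scalerA mulrC.
  have b2 : is_bary ap F (Cm^-1 *: Bm) l2.
    split; [|split].
    - by move=> a aF; rewrite /l2 zF // mul0r.
    - by rewrite /l2 -mulr_suml divff.
    - under eq_bigr do rewrite /l2 mulrC -scalerA.
      rewrite -scaler_sumr.
      have -> : \sum_a rho a *: ap a = (s / Cm) *: Bm.
        apply: (@scalerI _ _ Cm); first by rewrite gt_eqF.
        by rewrite hM scalerA mulrCA divff ?mulr1 // gt_eqF.
      by rewrite scalerA mulrA mulVf // mul1r.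
  move=> a; have := bary_uniq _ _ _ _ hiF b1 b2 a.
  rewrite /l1 /l2 => e; apply: (@mulIf _ s^-1); first by rewrite invr_eq0.
  by rewrite -e; field; rewrite s_ne0 gt_eqF.
exists (fun V => if V == F then s / Cm else 0); split.
  by move=> V _; case: eqP => // _; apply: divr_ge0 => //; exact: ltW.
move=> a; case: (boolP (a \in F)) => aF.
  rewrite (bigD1 F) /=; last by rewrite aF andbT; apply/asboolP.
  rewrite eqxx [X in _ + X]big1 ?addr0 ?key //.
  by move=> V /andP [_ /negbTE ->]; rewrite mul0r.
rewrite zF // big1 // => V /andP [_ aV].
by case: eqP => [e|_]; [rewrite -e aV in aF | rewrite mul0r].
Qed.

Lemma ratio rho nu : (forall a, 0 <= rho a) ->
  (forall a, a \notin supp rho -> nu a = 0) -> (exists a, nu a < 0) ->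
  exists t, 0 < t /\ (forall a, 0 <= rho a + t * nu a) /\
    exists a, a \in supp rho /\ rho a + t * nu a = 0.
Proof.
move=> r0 hs [i0 hi0].
have Pi0 : i0 \in [pred a | nu a < 0] by [].
case: (@arg_minP _ _ _ i0 [pred a | nu a < 0] (fun a => rho a / - nu a) Pi0).
move=> i Pi hmin.
have ni : nu i < 0 by [].
have iS : i \in supp rho.
  apply/negPn/negP => hn; by move: ni; rewrite hs // ltxx.
have ri : 0 < rho i.
  by rewrite lt_neqAle eq_sym r0 andbT; move: iS; rewrite inE.
exists (rho i / - nu i); split; first by apply: divr_gt0 => //; rewrite oppr_gt0.
split; last first.
  exists i; split => //; field; by rewrite lt_eqF.
move=> a; case: (leP 0 (nu a)) => hna.
  apply: addr_ge0 => //; apply: mulr_ge0 => //.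
  by apply: divr_ge0; [exact: r0 | rewrite oppr_ge0 ltW].
have := hmin a hna; rewrite /= => hm.
have nna : 0 < - nu a by rewrite oppr_gt0.
rewrite -[X in 0 <= _ + X]opprK -mulrN subr_ge0.
by rewrite -ler_pdivlMr.
Qed.

Lemma decomp rho : (forall a, 0 <= rho a) -> Mom rho -> Rep rho.
Proof.
suff : forall k rho, (#|supp rho| <= k)%N -> (forall a, 0 <= rho a) -> Mom rho -> Rep rho.
  by move=> H0 r0 hM; exact: (H0 _ rho (leqnn _)).
elim => [|k IH] {}rho hk r0 hM.
all: case: (pselect (indep (supp rho))) => hi.
all: try (have [w [hw hiw]] := find_face _ hi (fun w' hw' => KS rho w' r0 hM hw');
  apply: (Rep_simplex (Fs w)) => //;
    [apply: in_Lambda_of => // x Dx; exact: hconv | exact: KS]).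
all: have [mu [mz [ms [mv [a0 ma0]]]]] : exists mu : 'I_p -> R,
    (forall a, a \notin supp rho -> mu a = 0) /\ \sum_a mu a = 0 /\
    \sum_a mu a *: ap a = 0 /\ exists a, mu a != 0 by
  (apply: contrapT => hn; apply: hi => mu hz hs hv a;
   apply/eqP/negPn/negP => hna; apply: hn; exists mu; split => //; split => //;
   by split => //; exists a).
all: have a0S : a0 \in supp rho by apply/negPn/negP => h; rewrite mz // eqxx in ma0.
  by move: hk; rewrite leqn0 => /eqP/cards0_eq e; rewrite e inE in a0S.
have neg : forall nu : 'I_p -> R, \sum_a nu a = 0 -> nu a0 != 0 -> exists a, nu a < 0.
  move=> nu s0 n0; apply: contrapT => hn.
  have nn : forall a, 0 <= nu a.
    move=> a; rewrite leNgt; apply/negP => h; apply: hn; by exists a.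
  move: n0; rewrite (@psumr_eq0P _ _ predT nu) ?eqxx // => i _; exact: nn.
have [t1 [t1p [h1 [b1 [b1S b1z]]]]] := ratio _ mu r0 mz (neg _ ms ma0).
have mz' : forall a, a \notin supp rho -> - mu a = 0.
  by move=> a ha; rewrite mz // oppr0.
have ms' : \sum_a - mu a = 0 by rewrite sumrN ms oppr0.
have mv' : \sum_a (- mu a) *: ap a = 0.
  by under eq_bigr do rewrite scaleNr; rewrite sumrN mv oppr0.
have ma0' : - mu a0 != 0 by rewrite oppr_eq0.
have [t2 [t2p [h2 [b2 [b2S b2z]]]]] := ratio _ (fun a => - mu a) r0 mz' (neg _ ms' ma0').
have suppS : forall t (nu : 'I_p -> R) b, (forall a, a \notin supp rho -> nu a = 0) ->
    b \in supp rho -> rho b + t * nu b = 0 ->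
    (#|supp (fun a => rho a + t * nu a)%R| <= k)%N.
  move=> t nu b hz bS bz; rewrite -ltnS; apply: leq_trans hk.
  apply: proper_card; rewrite finset.properEneq; apply/andP; split.
    apply/eqP => e; have : b \in supp (fun a => rho a + t * nu a) by rewrite e.
    by rewrite inE bz eqxx.
  apply/fintype.subsetP => a; rewrite !inE; apply: contraNN => /eqP ra.
  by rewrite ra hz ?mulr0 ?addr0 // inE ra negbK.
have momS : forall t (nu : 'I_p -> R), \sum_a nu a = 0 -> \sum_a nu a *: ap a = 0 ->
    Mom (fun a => rho a + t * nu a).
  move=> t nu s0 v0; rewrite /Mom big_split /= -mulr_sumr s0 mulr0 addr0.
  under eq_bigr do rewrite scalerDl -scalerA.
  by rewrite big_split /= -scaler_sumr v0 scaler0 addr0.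
have R1 := IH _ (suppS _ _ _ mz b1S b1z) h1 (momS _ _ ms mv).
have R2 := IH _ (suppS _ _ _ mz' b2S b2z) h2 (momS _ _ ms' mv').
have tp : 0 < t1 + t2 by rewrite addr_gt0.
apply: (Rep_ext _ _ _ (RepC _ _ (t2 / (t1 + t2)) (t1 / (t1 + t2)) _ _ R1 R2)).
- move=> a; field; by rewrite gt_eqF.
- by apply: divr_ge0; [exact: ltW | exact: ltW].
- by apply: divr_ge0; [exact: ltW | exact: ltW].
Qed.
End Geo.

Theorem lemma3p13 (R : realType) (n p m : nat)
  (ap : 'I_p -> 'rV[R]_n) (am : 'I_m -> 'rV[R]_n)
  (cp : 'I_p -> R) (cm : 'I_m -> R) (D : set 'rV[R]_n) :
  injective ap -> injective am -> (forall i j, ap i <> am j) ->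
  full_dim (convhull (allpts ap am)) ->
  nonseparable ap am ->
  Fn_cell ap D -> (forall j, D (am j)) ->
  (forall i, 0 < cp i) -> (forall j, 0 < cm j) ->
  Sing_pos (signomial ap am cp cm) (const_mx 1) ->
  exists delta : {set 'I_p} -> R,
    (forall V, in_Lambda ap D V -> 0 <= delta V) /\
    forall a : 'I_p,
      cp a = \sum_(V : {set 'I_p} | `[< in_Lambda ap D V >] && (a \in V))
               delta V * (\sum_j bary ap V (am j) a * cm j).
Proof.
move=> _ _ _ _ _ [[sel [hsel hD]] hfull] hb cp0 cm0 hsing.
have [e1 e2] := @moments _ _ _ _ ap am cp cm hsing.
have [p0|ppos] := posnP p.
  exists (fun=> 0); split => // a.
  by have := ltn_ord a; rewrite {2}p0.
have mpos : (0 < m)%N.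
  case: (posnP m) => // m0; exfalso.
  have : \sum_j cm j = 0 by apply: big1 => -[j hj] _; exfalso; move: hj; by rewrite m0.
  rewrite -e1 => /eqP; apply/negP; rewrite gt_eqF //.
  rewrite (bigD1 (Ordinal ppos)) //=; apply: (lt_le_trans (cp0 (Ordinal ppos))).
  by rewrite lerDl; apply: sumr_ge0 => i _; exact: ltW.
have [U hU] := choice hsel.
have [H hH] := choice hU.
have hle : forall w i, @ell _ _ _ U H w (ap i) <= w i by move=> w i; exact: (hH w).1.
have hconv : forall w x, D x -> convhull (pts ap (@Fs _ _ _ ap U H w)) x.
  move=> w x Dx; have := (hH w).2.2; rewrite hD in Dx => <-; exact: Dx.
apply: (@decomp _ _ _ ap _ am cm D U H hle hconv hfull hb cm0 mpos).
  by move=> a; exact: ltW.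
by rewrite /Mom e2 e1.
Qed.
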